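(* Let $X$ be a regular Lindelöf $\Sigma$-space. If $X$ is homeomorphic to a subspace of a separable Hausdorff space, then $w(X)\leq\mathfrak c$.
   Context: A Hausdorff space $X$ is a Lindelöf $\Sigma$-space if there are families $\mathcal F$ and $\mathcal C$ of closed subsets of $X$ such that $\mathcal F$ is countable, every element of $\mathcal C$ is compact, $X=\bigcup\mathcal C$, and for every $C\in\mathcal C$ and every open $U\supseteq C$ there is $F\in\mathcal F$ with $C\subseteq F\subseteq U$. $w$ weight, $\mathfrak c=2^\omega$. *)

(* Defs.v *)
From Stdlib Require Import List.

Set Implicit Arguments.

Record TopSpace := {
  carrier :> Type;
  is_open : (carrier -> Prop) -> Prop;
  open_full : is_open (fun _ => True);
  open_inter : forall U V, is_open U -> is_open V -> is_open (fun x => U x /\ V x);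
  open_union : forall F : (carrier -> Prop) -> Prop,
      (forall U, F U -> is_open U) -> is_open (fun x => exists U, F U /\ U x)
}.

Definition subset {T : Type} (A B : T -> Prop) : Prop := forall x, A x -> B x.

Definition is_closed (X : TopSpace) (A : X -> Prop) : Prop :=
  is_open X (fun x => ~ A x).

Definition compact (X : TopSpace) (K : X -> Prop) : Prop :=
  forall Ucal : (X -> Prop) -> Prop,
    (forall U, Ucal U -> is_open X U) ->
    (forall x, K x -> exists U, Ucal U /\ U x) ->
    exists l : list (X -> Prop),
      (forall U, In U l -> Ucal U) /\
      (forall x, K x -> exists U, In U l /\ U x).

Definition hausdorff (X : TopSpace) : Prop :=
  forall x y : X, x <> y ->
    exists U V, is_open X U /\ is_open X V /\ U x /\ V y /\
                (forall z, U z -> V z -> False).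

Definition regular (X : TopSpace) : Prop :=
  forall (x : X) (A : X -> Prop), is_closed X A -> ~ A x ->
    exists U V, is_open X U /\ is_open X V /\ U x /\ subset A V /\
                (forall z, U z -> V z -> False).

(* Lindelöf Sigma-space (as in the paper; Hausdorff is part of the definition):
   a countable family F (indexed by nat) of closed sets and a family Ccal of
   compact closed sets covering X such that every C in Ccal and open U ⊇ C
   admit some F n with C ⊆ F n ⊆ U. *)
Definition lindelof_sigma (X : TopSpace) : Prop :=
  hausdorff X /\
  exists (F : nat -> (X -> Prop)) (Ccal : (X -> Prop) -> Prop),
    (forall n, is_closed X (F n)) /\
    (forall C, Ccal C -> is_closed X C /\ compact X C) /\
    (forall x : X, exists C, Ccal C /\ C x) /\
    (forall C U, Ccal C -> is_open X U -> subset C U ->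
       exists n, subset C (F n) /\ subset (F n) U).

Definition countable_set {T : Type} (D : T -> Prop) : Prop :=
  exists g : T -> nat, forall x y, D x -> D y -> g x = g y -> x = y.

Definition dense (Y : TopSpace) (D : Y -> Prop) : Prop :=
  forall U, is_open Y U -> (exists y, U y) -> exists y, U y /\ D y.

Definition separable (Y : TopSpace) : Prop :=
  exists D : Y -> Prop, countable_set D /\ dense Y D.

Definition continuous (X Y : TopSpace) (f : X -> Y) : Prop :=
  forall V, is_open Y V -> is_open X (fun x => V (f x)).

Definition embedding (X Y : TopSpace) (f : X -> Y) : Prop :=
  (forall x x', f x = f x' -> x = x') /\
  continuous X Y f /\
  (forall U, is_open X U ->
     exists V, is_open Y V /\ forall x, U x <-> V (f x)).

(* w(X) <= c: there is a base of X indexed by (nat -> bool) (a set of size c;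
   repetitions allowed, so this says the weight is at most c). *)
Definition weight_le_c (X : TopSpace) : Prop :=
  exists B : (nat -> bool) -> (X -> Prop),
    (forall i, is_open X (B i)) /\
    (forall U x, is_open X U -> U x -> exists i, B i x /\ subset (B i) U).

(* Main.v *)
Require Import Defs.
From Stdlib Require Import List Classical FunctionalExtensionality PropExtensionality ClassicalEpsilon Cantor.

Lemma open_ext (X : TopSpace) (A B : X -> Prop) :
  is_open X A -> (forall x, A x <-> B x) -> is_open X B.
Proof.
  intros HA H. assert (E : A = B).
  { apply functional_extensionality; intro x; apply propositional_extensionality; apply H. }
  rewrite <- E; exact HA.
Qed.

Lemma open_fin_inter (X : TopSpace) (I : Type) (l : list I) (G : I -> X -> Prop) :
  (forall i, is_open X (G i)) -> is_open X (fun y => forall i, In i l -> G i y).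
Proof.
  intros HG. induction l as [|a l IH].
  - apply open_ext with (A := fun _ => True). apply open_full.
    intro y; split; [intros _ i [] | auto].
  - apply open_ext with (A := fun y => G a y /\ (forall i, In i l -> G i y)).
    + apply open_inter; auto.
    + intro y; split.
      * intros [Ha Hl] i [<-|Hi]; auto.
      * intros H; split; [apply H; left; reflexivity | intros i Hi; apply H; right; exact Hi].
Qed.

Lemma open_or (X : TopSpace) (A B : X -> Prop) :
  is_open X A -> is_open X B -> is_open X (fun x => A x \/ B x).
Proof.
  intros HA HB. apply open_ext with (A := fun x => exists U, (U = A \/ U = B) /\ U x).
  - apply open_union. intros U [-> | ->]; auto.
  - intro x; split.
    + intros [U [[-> | ->] HU]]; auto.
    + intros [H|H]; [exists A | exists B]; auto.
Qed.

Lemma compact_idx (X : TopSpace) (K : X -> Prop) (I : Type) (G : I -> X -> Prop) :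
  compact X K -> (forall i, is_open X (G i)) -> (forall x, K x -> exists i, G i x) ->
  exists l : list I, forall x, K x -> exists i, In i l /\ G i x.
Proof.
  intros HK HG Hc.
  destruct (HK (fun O => exists i, O = G i)) as [l [Hl Hcov]].
  - intros U [i ->]; auto.
  - intros x Kx. destruct (Hc x Kx) as [i Hi]. exists (G i); split; eauto.
  - assert (Hli : forall l0 : list (X -> Prop), (forall U, In U l0 -> exists i, U = G i) ->
        exists li : list I, forall U, In U l0 -> exists i, In i li /\ U = G i).
    { induction l0 as [|U l0 IH]; intros H.
      - exists nil; intros V [].
      - destruct (H U (or_introl eq_refl)) as [i Hi].
        destruct IH as [li Hli]. { intros V HV; apply H; right; exact HV. }
        exists (i :: li). intros V [<- | HV].
        + exists i; split; [left; reflexivity | exact Hi].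
        + destruct (Hli V HV) as [j [Hj ->]]. exists j; split; [right; exact Hj | reflexivity]. }
    destruct (Hli l Hl) as [li Hli'].
    exists li. intros x Kx. destruct (Hcov x Kx) as [U [HU Ux]].
    destruct (Hli' U HU) as [i [Hi ->]]. exists i; auto.
Qed.

Lemma compact_closed_sub (X : TopSpace) (C A : X -> Prop) :
  compact X C -> is_open X (fun x => ~ A x) -> compact X (fun x => C x /\ A x).
Proof.
  intros HC HA Ucal HU Hcov.
  destruct (HC (fun O => Ucal O \/ O = (fun x => ~ A x))) as [l [Hl Hc]].
  - intros O [HO | ->]; auto.
  - intros x Cx. destruct (classic (A x)) as [Ax|nAx].
    + destruct (Hcov x (conj Cx Ax)) as [U [HU1 HU2]]. exists U; auto.
    + exists (fun x => ~ A x); auto.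
  - assert (Hf : forall l0 : list (X -> Prop), (forall O, In O l0 -> Ucal O \/ O = (fun x => ~ A x)) ->
       exists l1, (forall O, In O l1 -> Ucal O) /\ (forall O, In O l0 -> Ucal O -> In O l1)).
    { induction l0 as [|O l0 IH]; intros H.
      - exists nil; split; intros ? [].
      - destruct IH as [l1 [H1 H2]]. { intros V HV; apply H; right; exact HV. }
        destruct (classic (Ucal O)) as [UO|nUO].
        + exists (O :: l1); split.
          * intros V [<-|HV]; auto.
          * intros V [<-|HV] HUV; [left; reflexivity | right; auto].
        + exists l1; split; auto.
          intros V [<-|HV] HUV; [contradiction | auto]. }
    destruct (Hf l Hl) as [l1 [H1 H2]].
    exists l1; split; auto.
    intros x [Cx Ax]. destruct (Hc x Cx) as [O [HO Ox]].
    destruct (Hl O HO) as [UO | EO].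
    + exists O; split; auto.
    + rewrite EO in Ox. contradiction.
Qed.

Definition clY (Y : TopSpace) (A : Y -> Prop) (y : Y) : Prop :=
  forall O, is_open Y O -> O y -> exists y', O y' /\ A y'.

Lemma open_not_cl (Y : TopSpace) (G : Y -> Prop) : is_open Y (fun y => ~ clY Y G y).
Proof.
  apply open_ext with (A := fun y => exists O, (is_open Y O /\ forall w, O w -> ~ G w) /\ O y).
  - apply open_union. intros O [HO _]; exact HO.
  - intro y; split.
    + intros [O [[HO HOG] Oy]] Hcl. destruct (Hcl O HO Oy) as [w [Ow Gw]]. exact (HOG w Ow Gw).
    + intros H. apply NNPP; intro Hn; apply H; intros O HO Oy; apply NNPP; intro Hn2; apply Hn.
      exists O; split; [split; [exact HO | intros w Ow Gw; apply Hn2; exists w; auto] | exact Oy].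
Qed.

Lemma sep_point (X Y : TopSpace) (f : X -> Y) (K : X -> Prop) (p : Y) :
  hausdorff Y -> continuous X Y f -> compact X K -> (forall k, K k -> f k <> p) ->
  exists G, is_open Y G /\ G p /\ forall k, K k -> exists V, is_open Y V /\ V (f k) /\ forall y, V y -> G y -> False.
Proof.
  intros HY Hf HK Hne.
  set (I := {q : (Y -> Prop) * (Y -> Prop) | is_open Y (fst q) /\ is_open Y (snd q) /\ fst q p /\ forall y, fst q y -> snd q y -> False}).
  destruct (compact_idx X K I (fun i z => snd (proj1_sig i) (f z)) HK) as [l Hl].
  - intros i. apply Hf. exact (proj1 (proj2 (proj2_sig i))).
  - intros k Kk. destruct (HY p (f k)) as [U [V [HU [HV [Up [Vk Hd]]]]]].
    { intro E; apply (Hne k Kk); symmetry; exact E. }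
    exists (exist _ (U, V) (conj HU (conj HV (conj Up Hd))) : I); simpl; exact Vk.
  - exists (fun y => forall i, In i l -> fst (proj1_sig i) y). split; [|split].
    + apply open_fin_inter. intros i; exact (proj1 (proj2_sig i)).
    + intros i _; exact (proj1 (proj2 (proj2 (proj2_sig i)))).
    + intros k Kk. destruct (Hl k Kk) as [i [Hi Vk]].
      exists (snd (proj1_sig i)). split; [|split].
      * exact (proj1 (proj2 (proj2_sig i))).
      * exact Vk.
      * intros y Vy Gy. specialize (Gy i Hi). exact (proj2 (proj2 (proj2 (proj2_sig i))) y Gy Vy).
Qed.

Lemma sep_compact (X Y : TopSpace) (f : X -> Y) (K1 K2 : X -> Prop) :
  hausdorff Y -> continuous X Y f -> (forall a b, f a = f b -> a = b) ->
  compact X K1 -> compact X K2 -> (forall x, K1 x -> K2 x -> False) ->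
  exists G, is_open Y G /\ (forall a, K1 a -> G (f a)) /\
    forall k, K2 k -> exists V, is_open Y V /\ V (f k) /\ forall y, V y -> G y -> False.
Proof.
  intros HY Hf Hinj HK1 HK2 Hdis.
  set (I := {G : Y -> Prop | is_open Y G /\ forall k, K2 k -> exists V, is_open Y V /\ V (f k) /\ forall y, V y -> G y -> False}).
  destruct (compact_idx X K1 I (fun i z => proj1_sig i (f z)) HK1) as [l Hl].
  - intros i; apply Hf; exact (proj1 (proj2_sig i)).
  - intros a Ka. destruct (sep_point X Y f K2 (f a) HY Hf HK2) as [G [HG [Ga HGk]]].
    { intros k Kk E. apply (Hdis a Ka). rewrite (Hinj k a E) in Kk. exact Kk. }
    exists (exist _ G (conj HG HGk) : I); exact Ga.
  - exists (fun y => exists i, In i l /\ proj1_sig i y). split; [|split].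
    + apply open_ext with (A := fun y => exists U, (exists i, In i l /\ U = proj1_sig i) /\ U y).
      * apply open_union. intros U [i [_ ->]]. exact (proj1 (proj2_sig i)).
      * intro y; split.
        -- intros [U [[i [Hi ->]] Hy]]; eauto.
        -- intros [i [Hi Hy]]; exists (proj1_sig i); eauto.
    + intros a Ka. destruct (Hl a Ka) as [i [Hi Gi]]; eauto.
    + intros k Kk.
      exists (fun y => forall i, In i l -> exists V, (is_open Y V /\ V (f k) /\ forall y, V y -> proj1_sig i y -> False) /\ V y).
      split; [|split].
      * apply open_fin_inter. intro i. apply open_union. intros V [HV _]; exact HV.
      * intros i Hi. destruct (proj2 (proj2_sig i) k Kk) as [V [HV [Vk Hd]]]. exists V; auto.
      * intros y Hy [i [Hi Gy]]. destruct (Hy i Hi) as [V [[_ [_ Hd]] Vy]]. exact (Hd y Vy Gy).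
Qed.

Theorem theorem4 (X : TopSpace) :
  regular X -> lindelof_sigma X ->
  (exists (Y : TopSpace) (f : X -> Y), hausdorff Y /\ separable Y /\ embedding X Y f) ->
  weight_le_c X.
Proof.
  intros Hreg [HX [F [Ccal [HFc [HCc [HCcov HCsep]]]]]] [Y [f [HY [[D [[g Hg] HD]] [Hinj [Hf _]]]]]].
  exists (fun b x => exists O : X -> Prop, (is_open X O /\ forall y, O y ->
      ~ (exists n, F n y /\ ~ clY Y (fun d => D d /\ b (Cantor.to_nat (n, g d)) = true) (f y))) /\ O x).
  split.
  - intro b. apply open_union. intros O [HO _]; exact HO.
  - intros U x HU Ux.
    destruct (Hreg x (fun z => ~ U z)) as [V1 [V2 [HV1 [HV2 [V1x [Hsub Hdis]]]]]].
    { unfold is_closed. apply open_ext with (A := U); [exact HU | intro z; split; [intros Hz Hn; exact (Hn Hz) | apply NNPP]]. }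
    { intro H; exact (H Ux). }
    set (H := fun z => ~ V2 z).
    assert (HHc : is_open X (fun z => ~ H z)).
    { apply open_ext with (A := V2); [exact HV2 | intro z; unfold H; split; [intros a b; exact (b a) | apply NNPP]]. }
    assert (HV1H : forall z, V1 z -> H z) by (intros z a b; exact (Hdis z a b)).
    assert (HHU : forall z, H z -> U z).
    { intros z Hz; apply NNPP; intro nU; exact (Hz (Hsub z nU)). }
    set (hasGood := fun n => exists G, is_open Y G /\ (forall z, F n z -> H z -> G (f z)) /\
                                 (forall z, F n z -> clY Y G (f z) -> U z)).
    assert (Hex : forall n, exists G, is_open Y G /\ (forall z, F n z -> H z -> G (f z)) /\
                     (hasGood n -> forall z, F n z -> clY Y G (f z) -> U z)).
    { intro n. destruct (classic (hasGood n)) as [[G [HG [H1 H2]]] | Hn].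
      - exists G; auto.
      - exists (fun _ => True). split; [apply open_full | split; [auto | intro c; contradiction]]. }
    set (Gf := fun n => proj1_sig (constructive_indefinite_description _ (Hex n))).
    assert (HGf : forall n, is_open Y (Gf n) /\ (forall z, F n z -> H z -> Gf n (f z)) /\
                     (hasGood n -> forall z, F n z -> clY Y (Gf n) (f z) -> U z)).
    { intro n. exact (proj2_sig (constructive_indefinite_description _ (Hex n))). }
    set (P := fun m => exists n k, m = Cantor.to_nat (n, k) /\ exists d, D d /\ g d = k /\ Gf n d).
    set (b := fun m => if excluded_middle_informative (P m) then true else false).
    exists b. split.
    + exists V1. split; [split; [exact HV1 | ] | exact V1x].
      intros y V1y [n [Fny Hncl]]. apply Hncl.
      destruct (HGf n) as [HG [H1 _]].
      assert (Gy : Gf n (f y)) by (apply H1; [exact Fny | apply HV1H; exact V1y]).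
      intros O HO Oy. destruct (HD (fun w => O w /\ Gf n w)) as [d [[Od Gd] Dd]].
      * apply open_inter; assumption.
      * exists (f y); split; assumption.
      * exists d. split; [exact Od | split; [exact Dd |]].
        unfold b. destruct (excluded_middle_informative (P (Cantor.to_nat (n, g d)))) as [_|Hn]; [reflexivity|].
        exfalso; apply Hn. exists n, (g d). split; [reflexivity | exists d; auto].
    + intros y [O [[HO HOM] Oy]]. apply NNPP; intro nUy. apply (HOM y Oy).
      destruct (HCcov y) as [C [CC Cy]].
      destruct (HCc C CC) as [_ Ccomp].
      destruct (sep_compact X Y f (fun z => C z /\ H z) (fun z => C z /\ ~ U z) HY Hf Hinj) as [G [HG [HG1 HG2]]].
      * apply compact_closed_sub; [exact Ccomp | exact HHc].
      * apply compact_closed_sub; [exact Ccomp | ].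
        apply open_ext with (A := U); [exact HU | intro z; split; [intros a b0; exact (b0 a) | apply NNPP]].
      * intros z [_ Hz] [_ nUz]. exact (nUz (HHU z Hz)).
      * destruct (HCsep C (fun z => (~ H z \/ G (f z)) /\ (~ clY Y G (f z) \/ U z)) CC) as [n [HCn HnO]].
        -- apply open_inter; apply open_or.
           ++ exact HHc.
           ++ apply Hf; exact HG.
           ++ exact (Hf _ (open_not_cl Y G)).
           ++ exact HU.
        -- intros z Cz. split.
           ++ destruct (classic (H z)) as [Hz|Hz]; [right; apply HG1; auto | left; exact Hz].
           ++ destruct (classic (U z)) as [Uz|Uz]; [right; exact Uz | left].
              destruct (HG2 z (conj Cz Uz)) as [V [HV [Vz Hd]]].
              intro Hcl. destruct (Hcl V HV Vz) as [w [Vw Gw]]. exact (Hd w Vw Gw).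
        -- assert (hg : hasGood n).
           { exists G. split; [exact HG | split].
             - intros z Fz Hz. destruct (HnO z Fz) as [[nH|Gz] _]; [contradiction | exact Gz].
             - intros z Fz Hcl. destruct (HnO z Fz) as [_ [ncl|Uz]]; [contradiction | exact Uz]. }
           exists n. split; [apply HCn; exact Cy |].
           intro Hcl. apply nUy. destruct (HGf n) as [_ [_ H3]]. apply (H3 hg y (HCn y Cy)).
           intros O' HO' O'y. destruct (Hcl O' HO' O'y) as [d [O'd [Dd bd]]].
           exists d. split; [exact O'd|].
           unfold b in bd.
           destruct (excluded_middle_informative (P (Cantor.to_nat (n, g d)))) as [[n' [k [E [d' [Dd' [gd' Gd']]]]]]|]; [|discriminate].
           assert (E2 := f_equal Cantor.of_nat E). rewrite !Cantor.cancel_of_to in E2.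
           injection E2 as <- <-.
           rewrite (Hg d d' Dd Dd' (eq_sym gd')). exact Gd'.
Qed.
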